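(* Let $G,H$ be graphs with $H$ connected and let $b$ be a positive integer. Consider the $(H,b)$ deletion algorithm: starting from $G_0=G$, as long as possible obtain $G_{i+1}$ from $G_i$ by deleting, arbitrarily, either a bad vertex, a bad edge, a bad set, or (the vertex set of) a small component, all defined with respect to the current graph $G_i$ and the fixed $H,b$. Then, regardless of the arbitrary choices made, the algorithm terminates with the $(H,b)$-core of $G$. In particular the $(H,b)$-core of $G$ is $(H,b)$-stable.
   Context: With respect to a graph $F$, a connected graph $H$ and a positive integer $b$: a bad vertex is a vertex of $F$ lying in no copy of $H$ in $F$; a bad edge is an edge of $F$ lying in no copy of $H$ in $F$; a bad set is a set $U\subseteq V(F)$ with $2\le|U|\le b+1$ such that no copy $\hat H$ of $H$ in $F$ satisfies $|V(\hat H)\cap U|=1$; a small component is a connected component of $F$ with at most $(b+1)(v(H)-1)$ vertices. A graph is $(H,b)$-stable if none of these four exist in it. The $(H,b)$-core of $G$ is the union of all $(H,b)$-stable subgraphs of $G$. *)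

(* Defs.v *)
From Stdlib Require Import Relations ClassicalEpsilon.
From HB Require Import structures.
From mathcomp Require Import all_boot.
Set Implicit Arguments. Unset Strict Implicit. Unset Printing Implicit Defensive.

Definition sgraph (V : finType) := ({set V} * {set {set V}})%type.
Definition verts {V : finType} (F : sgraph V) : {set V} := F.1.
Definition edges {V : finType} (F : sgraph V) : {set {set V}} := F.2.

Definition wf_graph {V : finType} (F : sgraph V) : Prop :=
  forall e, e \in edges F -> #|e| = 2 /\ e \subset verts F.

Definition subgraph {V : finType} (F G : sgraph V) : Prop :=
  [/\ verts F \subset verts G, edges F \subset edges G & wf_graph F].

Definition adj {V : finType} (F : sgraph V) : rel V :=
  fun x y => [set x; y] \in edges F.

Definition connected_graph {W : finType} (H : sgraph W) : Prop :=
  (0 < #|verts H|) /\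
  forall x y, x \in verts H -> y \in verts H -> connect (adj H) x y.

Definition is_copy {W V : finType} (H : sgraph W) (F K : sgraph V) : Prop :=
  exists f : W -> V,
    [/\ {in verts H &, injective f},
        f @: verts H \subset verts F,
        (forall e : {set W}, e \in edges H -> f @: e \in edges F) &
        K = (f @: verts H, [set f @: e | e : {set W} in edges H])].

Definition bad_vertex {W V : finType} (H : sgraph W) (F : sgraph V) (v : V) : Prop :=
  v \in verts F /\ ~ (exists K, is_copy H F K /\ v \in verts K).

Definition bad_edge {W V : finType} (H : sgraph W) (F : sgraph V) (e : {set V}) : Prop :=
  e \in edges F /\ ~ (exists K, is_copy H F K /\ e \in edges K).

Definition bad_set {W V : finType} (H : sgraph W) (b : nat) (F : sgraph V)
    (U : {set V}) : Prop :=
  [/\ U \subset verts F, 2 <= #|U| <= b.+1 &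
      ~ (exists K, is_copy H F K /\ #|verts K :&: U| = 1)].

Definition component {V : finType} (F : sgraph V) (C : {set V}) : Prop :=
  exists2 x, x \in verts F & C = [set y in verts F | connect (adj F) x y].

Definition small_component {W V : finType} (H : sgraph W) (b : nat)
    (F : sgraph V) (C : {set V}) : Prop :=
  component F C /\ #|C| <= b.+1 * (#|verts H| - 1).

Definition stable {W V : finType} (H : sgraph W) (b : nat) (F : sgraph V) : Prop :=
  [/\ forall v, ~ bad_vertex H F v,
      forall e, ~ bad_edge H F e,
      forall U, ~ bad_set H b F U &
      forall C, ~ small_component H b F C].

Definition del_verts {V : finType} (F : sgraph V) (U : {set V}) : sgraph V :=
  (verts F :\: U, [set e in edges F | [disjoint e & U]]).
Definition del_edge {V : finType} (F : sgraph V) (e : {set V}) : sgraph V :=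
  (verts F, edges F :\ e).

Inductive del_step {W V : finType} (H : sgraph W) (b : nat) (F : sgraph V)
  : sgraph V -> Prop :=
| step_vertex v : bad_vertex H F v -> del_step H b F (del_verts F [set v])
| step_edge e : bad_edge H F e -> del_step H b F (del_edge F e)
| step_set U : bad_set H b F U -> del_step H b F (del_verts F U)
| step_comp C : small_component H b F C -> del_step H b F (del_verts F C).

Definition pbool (P : Prop) : bool :=
  if excluded_middle_informative P then true else false.

Definition core {W V : finType} (H : sgraph W) (b : nat) (G : sgraph V) : sgraph V :=
  (\bigcup_(F : sgraph V | pbool (subgraph F G /\ stable H b F)) verts F,
   \bigcup_(F : sgraph V | pbool (subgraph F G /\ stable H b F)) edges F).

(* Main.v *)
Require Import Defs.
From Stdlib Require Import Relations Classical ClassicalEpsilon.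
From mathcomp Require Import all_boot.
Set Implicit Arguments. Unset Strict Implicit. Unset Printing Implicit Defensive.

Definition subg {V : finType} (S F : sgraph V) : Prop :=
  verts S \subset verts F /\ edges S \subset edges F.

Lemma disjP {T : finType} (A B : {set T}) :
  (forall x, x \in A -> x \notin B) -> [disjoint A & B].
Proof.
move=> h; rewrite disjoints_subset; apply/subsetP => x hx; rewrite inE; exact: h.
Qed.

Lemma disjE {T : finType} (A B : {set T}) x :
  [disjoint A & B] -> x \in A -> x \notin B.
Proof.
rewrite disjoints_subset => /subsetP h hx; have := h x hx; by rewrite inE.
Qed.

Lemma pboolP (P : Prop) : pbool P = true <-> P.
Proof. rewrite /pbool; case: excluded_middle_informative => //. Qed.

Lemma copy_mono {W V : finType} (H : sgraph W) (S F K : sgraph V) :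
  subg S F -> is_copy H S K -> is_copy H F K.
Proof.
move=> [sv se] [f [inj im ed ->]]; exists f; split => //.
- exact: subset_trans sv.
- move=> e he; apply: (subsetP se); exact: ed.
Qed.

Lemma copy_sub {W V : finType} (H : sgraph W) (S K : sgraph V) :
  is_copy H S K -> subg K S.
Proof.
move=> [f [inj im ed ->]]; split => //=.
apply/subsetP => e /imsetP [e' he' ->]; exact: ed.
Qed.

Lemma wf_step {W V : finType} (H : sgraph W) b (F F' : sgraph V) :
  wf_graph F -> del_step H b F F' -> wf_graph F'.
Proof.
have dv : forall U, wf_graph F -> wf_graph (del_verts F U).
  move=> U wF e; rewrite /del_verts /edges /= inE => /andP [he dj].
  have [c s] := wF e he; split => //; rewrite subsetD; by apply/andP.
move=> wF [v _|e _|U _|C _]; try exact: dv.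
move=> e0; rewrite /del_edge /edges /= in_setD1 => /andP [_ h]; exact: wF.
Qed.

Lemma subg_refl {V : finType} (F : sgraph V) : subg F F.
Proof. by split. Qed.

Lemma subg_trans {V : finType} (A B C : sgraph V) : subg A B -> subg B C -> subg A C.
Proof. move=> [a1 a2] [b1 b2]; split; [exact: subset_trans a1 b1|exact: subset_trans a2 b2]. Qed.

Lemma step_sub {W V : finType} (H : sgraph W) b (F F' : sgraph V) :
  del_step H b F F' -> subg F' F.
Proof.
have dv : forall U, subg (del_verts F U) F.
  move=> U; split; first exact: subsetDl.
  apply/subsetP => e; rewrite inE; by case/andP.
case=> [v _|e _|U _|C _]; try exact: dv.
split => //; exact: subsetDl.
Qed.

Lemma del_verts_ok {V : finType} (S F : sgraph V) (U : {set V}) :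
  wf_graph S -> subg S F -> [disjoint verts S & U] -> subg S (del_verts F U).
Proof.
move=> wS [sv se] dj; split.
  rewrite /del_verts /verts /= subsetD; apply/andP; split => //.
apply/subsetP => e he; rewrite /del_verts /edges /= inE (subsetP se) //=.
have [_ sub] := wS e he.
apply: disjP => x hx; apply: (disjE dj); exact: (subsetP sub).
Qed.

Lemma keep {W V : finType} (H : sgraph W) b (S F F' : sgraph V) :
  wf_graph S -> stable H b S -> subg S F -> del_step H b F F' -> subg S F'.
Proof.
move=> wS [nv ne ns nc] sSF; case.
- move=> v [vF nk]; apply: del_verts_ok => //; apply: disjP => x hx.
  rewrite inE; apply/eqP => ?; subst x; apply: nk.
  apply: NNPP => hn; apply: (nv v); split => // [[K [cK vK]]].
  apply: hn; exists K; split => //; exact: copy_mono cK.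
- move=> e [eF nk].
  have eS : e \notin edges S.
    apply/negP => eS; apply: nk; apply: NNPP => hn; apply: (ne e); split => // [[K [cK vK]]].
    apply: hn; exists K; split => //; exact: copy_mono cK.
  case: sSF => sv se; split => //; rewrite /del_edge /edges /= subsetD1 se; exact: eS.
- move=> U [UF cU nk]; apply: del_verts_ok => //.
  apply: NNPP => ndj; apply: nk.
  set U' := verts S :&: U.
  have hU' : 0 < #|U'|.
    rewrite card_gt0; apply/negP => /eqP e0; apply: ndj.
    apply: disjP => x hx; apply/negP => hxU.
    have : x \in U' by rewrite inE hx hxU.
    by rewrite e0 inE.
  have [K [cK hK]] : exists K, is_copy H S K /\ #|verts K :&: U'| = 1.
    case: (ltngtP #|U'| 1) => hc.
    + by move: hU' hc; case: #|U'|.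
    + apply: NNPP => hn; apply: (ns U'); split.
      * exact: subsetIl.
      * rewrite hc /=; apply: leq_trans (subset_leq_card (subsetIr _ _)) _.
        by case/andP: cU.
      * move=> [K [cK hK]]; apply: hn; by exists K.
    + move/eqP/cards1P: hc => [u hu].
      have : u \in U' by rewrite hu inE.
      rewrite inE => /andP [uS _].
      apply: NNPP => hn; apply: (nv u); split => // [[K [cK vK]]].
      apply: hn; exists K; split => //; rewrite hu.
      apply/eqP/cards1P; exists u; apply/setP => x; rewrite !inE.
      case: eqP => [->|]; by rewrite ?vK ?andbT ?andbF.
  exists K; split; first exact: copy_mono cK.
  rewrite -hK; apply: eq_card => x; rewrite !inE.
  case hx: (x \in verts K) => //=.
  have [sv _] := copy_sub cK; by rewrite (subsetP sv).
- move=> C [[x xF ->] hC]; apply: del_verts_ok => //.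
  apply: disjP => z zS; rewrite inE; apply/negP => /andP [zF xz].
  set C' := [set y in verts S | connect (adj S) z y].
  apply: (nc C'); split; first by exists z.
  apply: leq_trans hC; apply: subset_leq_card; apply/subsetP => y.
  rewrite !inE => /andP [yS zy]; case: sSF => sv se.
  rewrite (subsetP sv) //=; apply: connect_trans xz _.
  apply: connect_sub zy => u w uw; apply: connect1.
  rewrite /adj (subsetP se) //.
Qed.

Definition msr {V : finType} (F : sgraph V) := #|verts F| + #|edges F|.

Lemma dv_lt {V : finType} (F : sgraph V) (U : {set V}) u :
  u \in verts F -> u \in U -> msr (del_verts F U) < msr F.
Proof.
move=> uF uU; rewrite /msr /del_verts /verts /edges /=.
rewrite -addSn; apply: leq_add.
  rewrite (cardsD1 u F.1) uF add1n ltnS; apply: subset_leq_card.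
  apply/subsetP => y; rewrite !inE => /andP [yU yF]; rewrite yF andbT.
  by apply/eqP => E; subst; rewrite uU in yU.
apply: subset_leq_card; apply/subsetP => e; rewrite inE.
by case/andP.
Qed.

Lemma step_lt {W V : finType} (H : sgraph W) b (F F' : sgraph V) :
  del_step H b F F' -> msr F' < msr F.
Proof.
case.
- move=> v [vF _]; apply: (dv_lt vF); exact: set11.
- move=> e [eF _]; rewrite /msr /del_edge /verts /edges /= ltn_add2l.
  by rewrite (cardsD1 e F.2) eF.
- move=> U [UF cU _].
  have : 0 < #|U| by case/andP: cU => h _; apply: leq_trans h.
  case/card_gt0P => u uU; apply: (dv_lt _ uU); exact: (subsetP UF).
- move=> C [[x xF ->] _]; apply: (dv_lt xF); by rewrite inE xF connect0.
Qed.

Lemma acc_step {W V : finType} (H : sgraph W) b (G : sgraph V) :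
  Acc (fun F' F => del_step H b F F') G.
Proof.
have : forall n (F : sgraph V), msr F < n -> Acc (fun F' F => del_step H b F F') F.
  elim=> [|n IH] F hF; first by [].
  constructor => F' st; apply: IH; apply: leq_trans (step_lt st) _; exact: hF.
move=> h; exact: (h (msr G).+1).
Qed.

Lemma exists_term {W V : finType} (H : sgraph W) b (G : sgraph V) :
  Acc (fun F' F => del_step H b F F') G ->
  exists F, clos_refl_trans (sgraph V) (del_step H b) G F /\ (forall F', ~ del_step H b F F').
Proof.
elim=> {}G _ IH.
case: (classic (exists F', del_step H b G F')) => [[F' st]|nst].
  have [F [r t]] := IH F' st; exists F; split => //.
  apply: rt_trans r; exact: rt_step.
exists G; split; first exact: rt_refl.
move=> F' st; apply: nst; by exists F'.
Qed.

Lemma term_stable {W V : finType} (H : sgraph W) b (F : sgraph V) :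
  (forall F', ~ del_step H b F F') -> stable H b F.
Proof.
move=> t; split.
- move=> v h; apply: (t (del_verts F [set v])); exact: step_vertex.
- move=> e h; apply: (t (del_edge F e)); exact: step_edge.
- move=> U h; apply: (t (del_verts F U)); exact: step_set.
- move=> C h; apply: (t (del_verts F C)); exact: step_comp.
Qed.

Lemma reach_inv {W V : finType} (H : sgraph W) b (G F : sgraph V) :
  wf_graph G -> clos_refl_trans (sgraph V) (del_step H b) G F ->
  [/\ wf_graph F, subg F G &
      forall S, subgraph S G -> stable H b S -> subg S F].
Proof.
move=> wG r0; have r := @clos_rt_rtn1 _ _ _ _ r0; clear r0; elim: r => [|F1 F2 st _ [w1 s1 k1]].
  split; [exact: wG | exact: subg_refl | by move=> S [a c d] _; split].
split; first exact: wf_step st.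
  exact: subg_trans (step_sub st) s1.
move=> S hS stS; apply: keep st => //; first by case: hS.
exact: k1.
Qed.

Lemma term_core {W V : finType} (H : sgraph W) b (G F : sgraph V) :
  wf_graph G -> clos_refl_trans (sgraph V) (del_step H b) G F ->
  (forall F', ~ del_step H b F F') -> F = core H b G.
Proof.
move=> wG r t; have [wF [sv se] k] := reach_inv wG r.
have stF := term_stable t.
have inF : pbool (subgraph F G /\ stable H b F) = true by apply/pboolP.
case: F wF sv se k stF t r inF => vF eF wF sv se k stF t r inF.
rewrite /core; congr pair; apply/setP => x; apply/idP/idP.
- by move=> hx; apply/bigcupP; exists (vF, eF); rewrite ?inF.
- case/bigcupP => S /pboolP [hS stS] hx.
  have [s1 _] := k S hS stS; exact: (subsetP s1).
- by move=> hx; apply/bigcupP; exists (vF, eF); rewrite ?inF.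
- case/bigcupP => S /pboolP [hS stS] hx.
  have [_ s2] := k S hS stS; exact: (subsetP s2).
Qed.

Theorem mainTheorem13 (W V : finType) (H : sgraph W) (G : sgraph V) (b : nat) :
  wf_graph H -> connected_graph H -> wf_graph G -> 0 < b ->
  [/\ Acc (fun F' F => del_step H b F F') G,
      (forall F, clos_refl_trans (sgraph V) (del_step H b) G F ->
                 (forall F', ~ del_step H b F F') -> F = core H b G) &
      stable H b (core H b G)].
Proof.
move=> _ _ wG _; have A := acc_step H b G.
split => //.
- move=> F r t; exact: term_core.
- have [F [r t]] := exists_term A.
  rewrite -(term_core wG r t); exact: term_stable.
Qed.
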